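(* Let $n\in\mathbb{N}$ with $n>1$ and $r:=1/n$. The unique solution $u$ of $D_ru=0$ in $(0,1)$, $u=0$ in $[-r,0]$, $u=1$ in $[1,1+r]$ is discontinuous (it has no continuous representative on $[-r,1+r]$).
   Context: $D_ru(x):=\dfrac{u(x+r)+u(x-r)-2u(x)}{r^2}$; the equation is required a.e. in $(0,1)$ and solutions are identified up to null sets. *)

(* Defs.v *)
From Stdlib Require Import Reals Lra.
Open Scope R_scope.

Definition null_set (S : R -> Prop) : Prop :=
  forall eps : R, 0 < eps ->
    exists a b : nat -> R,
      (forall k, a k <= b k) /\
      (forall x, S x -> exists k, a k < x < b k) /\
      (forall N, sum_f_R0 (fun k => b k - a k) N <= eps).

Definition ae_on (A : R -> Prop) (P : R -> Prop) : Prop :=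
  null_set (fun x => A x /\ ~ P x).

Definition Dr (r : R) (u : R -> R) (x : R) : R :=
  (u (x + r) + u (x - r) - 2 * u x) / r ^ 2.

Definition is_solution (r : R) (u : R -> R) : Prop :=
  ae_on (fun x => 0 < x < 1) (fun x => Dr r u x = 0) /\
  ae_on (fun x => - r <= x <= 0) (fun x => u x = 0) /\
  ae_on (fun x => 1 <= x <= 1 + r) (fun x => u x = 1).

Definition continuous_on_Icc (a b : R) (v : R -> R) : Prop :=
  forall x, a <= x <= b ->
    forall eps, 0 < eps -> exists delta, 0 < delta /\
      forall y, a <= y <= b -> Rabs (y - x) < delta -> Rabs (v y - v x) < eps.

(* Main.v *)
Require Import Defs.
From Stdlib Require Import Reals Lra Lia ZArith List Classical.
Open Scope R_scope.

Lemma sum_mono (f : nat -> R) : (forall k, 0 <= f k) ->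
  forall m p, sum_f_R0 f m <= sum_f_R0 f (m + p).
Proof.
  intros Hf m p; induction p as [|p IH].
  - rewrite Nat.add_0_r; lra.
  - rewrite Nat.add_succ_r; simpl; specialize (Hf (S (m + p))); lra.
Qed.

Lemma null_subset (P Q : R -> Prop) : (forall x, P x -> Q x) -> null_set Q -> null_set P.
Proof.
  intros H HQ eps He; destruct (HQ eps He) as [a [b [H1 [H2 H3]]]].
  exists a, b; repeat split; auto.
Qed.

Lemma null_union (P Q : R -> Prop) : null_set P -> null_set Q ->
  null_set (fun x => P x \/ Q x).
Proof.
  intros HP HQ eps He.
  destruct (HP (eps/2) ltac:(lra)) as [a1 [b1 [H11 [H12 H13]]]].
  destruct (HQ (eps/2) ltac:(lra)) as [a2 [b2 [H21 [H22 H23]]]].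
  exists (fun k => if Nat.even k then a1 (Nat.div2 k) else a2 (Nat.div2 k)).
  exists (fun k => if Nat.even k then b1 (Nat.div2 k) else b2 (Nat.div2 k)).
  split; [|split].
  - intros k; destruct (Nat.even k); auto.
  - intros x [Hx|Hx].
    + destruct (H12 x Hx) as [k Hk]; exists (2 * k)%nat.
      rewrite Nat.even_even, Nat.div2_double; auto.
    + destruct (H22 x Hx) as [k Hk]; exists (S (2 * k))%nat.
      replace (S (2*k))%nat with (2*k+1)%nat by lia.
      rewrite Nat.even_odd. replace (2*k+1)%nat with (S (2*k))%nat by lia.
      rewrite Nat.div2_succ_double; auto.
  - set (c := fun k => (if Nat.even k then b1 (Nat.div2 k) else b2 (Nat.div2 k)) -
                       (if Nat.even k then a1 (Nat.div2 k) else a2 (Nat.div2 k))).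
    assert (Hc : forall k, 0 <= c k).
    { intros k; unfold c; destruct (Nat.even k); [specialize (H11 (Nat.div2 k))|specialize (H21 (Nat.div2 k))]; lra. }
    assert (Hsplit : forall M, sum_f_R0 c (2 * M + 1) =
       sum_f_R0 (fun k => b1 k - a1 k) M + sum_f_R0 (fun k => b2 k - a2 k) M).
    { induction M as [|M IH].
      - simpl. unfold c. simpl. ring.
      - replace (2 * S M + 1)%nat with (S (S (2 * M + 1))) by lia.
        change (sum_f_R0 c (S (S (2 * M + 1)))) with (sum_f_R0 c (2 * M + 1) + c (S (2 * M + 1)) + c (S (S (2 * M + 1)))).
        rewrite IH. simpl sum_f_R0.
        unfold c.
        replace (S (2 * M + 1)) with (2 * S M)%nat by lia.
        replace (S (2 * S M)) with (2 * S M + 1)%nat by lia.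
        rewrite Nat.even_even, Nat.even_odd.
        replace (2 * S M + 1)%nat with (S (2 * S M)) by lia.
        rewrite Nat.div2_double, Nat.div2_succ_double. ring. }
    intros N.
    pose proof (sum_mono c Hc N (N + 1)%nat) as Hm.
    replace (N + (N + 1))%nat with (2 * N + 1)%nat in Hm by lia.
    rewrite Hsplit in Hm. specialize (H13 N); specialize (H23 N); lra.
Qed.

Lemma null_point (x0 : R) : null_set (fun x => x = x0).
Proof.
  intros eps He.
  exists (fun k => match k with O => x0 - eps/4 | _ => x0 end).
  exists (fun k => match k with O => x0 + eps/4 | _ => x0 end).
  split; [|split].
  - intros [|k]; lra.
  - intros x ->; exists O; lra.
  - assert (H : forall N, sum_f_R0 (fun k => (match k with O => x0 + eps/4 | _ => x0 end) -
       (match k with O => x0 - eps/4 | _ => x0 end)) N = eps/2).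
    { induction N; simpl in *; [lra|]. rewrite IHN; ring. }
    intros N; rewrite H; lra.
Qed.

Lemma null_translate (P : R -> Prop) (c : R) : null_set P -> null_set (fun x => P (x + c)).
Proof.
  intros HP eps He; destruct (HP eps He) as [a [b [H1 [H2 H3]]]].
  exists (fun k => a k - c), (fun k => b k - c); split; [|split].
  - intros k; specialize (H1 k); lra.
  - intros x Hx; destruct (H2 _ Hx) as [k Hk]; exists k; lra.
  - intros N; eapply Rle_trans; [|apply (H3 N)]; right.
    apply sum_eq; intros; ring.
Qed.

Lemma null_finite (P : nat -> R -> Prop) (M : nat) :
  (forall k, (k <= M)%nat -> null_set (P k)) ->
  null_set (fun x => exists k, (k <= M)%nat /\ P k x).
Proof.
  induction M as [|M IH]; intros H.
  - apply null_subset with (P O); [|apply H; lia].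
    intros x [k [Hk Hx]]; replace k with O in Hx by lia; auto.
  - apply null_subset with (fun x => (exists k, (k <= M)%nat /\ P k x) \/ P (S M) x).
    + intros x [k [Hk Hx]]. destruct (Nat.eq_dec k (S M)) as [->|Hne]; [right; auto|].
      left; exists k; split; [lia|auto].
    + apply null_union; [apply IH; intros; apply H; lia|apply H; lia].
Qed.

Lemma null_finiteZ (P : Z -> R -> Prop) (lo hi : Z) : (lo <= hi)%Z ->
  (forall z, (lo <= z <= hi)%Z -> null_set (P z)) ->
  null_set (fun x => exists z, (lo <= z <= hi)%Z /\ P z x).
Proof.
  intros Hlh H.
  apply null_subset with (fun x => exists k, (k <= Z.to_nat (hi - lo))%nat /\ P (lo + Z.of_nat k)%Z x).
  - intros x [z [Hz Hx]]. exists (Z.to_nat (z - lo)); split; [lia|].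
    replace (lo + Z.of_nat (Z.to_nat (z - lo)))%Z with z by lia; auto.
  - apply null_finite; intros k Hk; apply H; lia.
Qed.

Definition sumL (a b : nat -> R) (l : list nat) : R :=
  fold_right (fun k s => b k - a k + s) 0 l.

Lemma sumL_app a b l1 l2 : sumL a b (l1 ++ l2) = sumL a b l1 + sumL a b l2.
Proof. induction l1; simpl; [ring|rewrite IHl1; ring]. Qed.

Lemma sumL_nonneg a b l : (forall k, a k <= b k) -> 0 <= sumL a b l.
Proof. intros H; induction l; simpl; [lra|specialize (H a0); lra]. Qed.

Lemma finite_cover (a b : nat -> R) (Hab : forall k, a k <= b k) :
  forall m (l : list nat), (length l <= m)%nat -> forall c d, c <= d ->
  (forall y, c <= y <= d -> exists k, In k l /\ a k < y < b k) ->
  d - c < sumL a b l.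
Proof.
  induction m as [|m IH]; intros l Hl c d Hcd Hcov.
  - destruct (Hcov c ltac:(lra)) as [k [Hk _]]. destruct l; simpl in *; [contradiction|lia].
  - destruct (Hcov c ltac:(lra)) as [k [Hk Hck]].
    destruct (in_split _ _ Hk) as [l1 [l2 ->]].
    rewrite sumL_app; simpl.
    assert (H0 := sumL_nonneg a b l1 Hab). assert (H1 := sumL_nonneg a b l2 Hab).
    destruct (Rlt_le_dec d (b k)) as [Hd|Hd]; [lra|].
    assert (Hrec : d - b k < sumL a b (l1 ++ l2)).
    { apply IH; [rewrite length_app in *; simpl in Hl; lia|lra|].
      intros y Hy. destruct (Hcov y ltac:(lra)) as [k' [Hk' Hy']].
      exists k'; split; [|auto].
      apply in_app_or in Hk'. apply in_or_app. destruct Hk' as [?|[<-|?]]; auto. lra. }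
    rewrite sumL_app in Hrec. lra.
Qed.

Lemma hb (a b : nat -> R) c d : c <= d ->
  (forall y, c <= y <= d -> exists k, a k < y < b k) ->
  exists N, forall y, c <= y <= d -> exists k, (k <= N)%nat /\ a k < y < b k.
Proof.
  intros Hcd Hcov.
  set (E := fun x => c <= x <= d /\ exists N, forall y, c <= y <= x -> exists k, (k <= N)%nat /\ a k < y < b k).
  assert (Ec : E c).
  { split; [lra|]. destruct (Hcov c ltac:(lra)) as [k0 Hk0]. exists k0.
    intros y Hy; exists k0; split; [lia|]. replace y with c by lra; auto. }
  assert (Hb : bound E) by (exists d; intros x [Hx _]; lra).
  destruct (completeness E Hb (ex_intro _ c Ec)) as [s [Hs1 Hs2]].
  assert (Hcs : c <= s) by (apply Hs1; auto).
  assert (Hsd : s <= d) by (apply Hs2; intros x [Hx _]; lra).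
  destruct (Hcov s ltac:(lra)) as [j Hj].
  assert (Hx : exists x, E x /\ a j < x).
  { apply NNPP; intros Hn. assert (s <= a j); [|lra].
    apply Hs2; intros x Ex. apply Rnot_lt_le; intros Hlt; apply Hn; exists x; auto. }
  destruct Hx as [x [[Hx1 [N HN]] Hxa]].
  set (z := Rmin d ((s + b j)/2)).
  assert (Ez : E z).
  { split.
    - unfold z, Rmin; destruct (Rle_dec d ((s + b j)/2)); lra.
    - exists (Nat.max N j). intros y Hy.
      destruct (Rle_dec y x) as [Hyx|Hyx].
      + destruct (HN y ltac:(lra)) as [k [Hk1 Hk2]]; exists k; split; [lia|auto].
      + exists j; split; [lia|]. split; [lra|].
        assert (y <= (s + b j)/2) by (unfold z, Rmin in Hy; destruct (Rle_dec d ((s + b j)/2)); lra).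
        lra. }
  assert (Hzs : z <= s) by (apply Hs1; auto).
  assert (Hzd : z = d).
  { unfold z, Rmin in *; destruct (Rle_dec d ((s + b j)/2)); lra. }
  rewrite Hzd in Ez. destruct Ez as [_ [N' HN']]. exists N'; intros y Hy; apply HN'; lra.
Qed.

Lemma sumL_seq a b N : sumL a b (seq 0 (S N)) = sum_f_R0 (fun k => b k - a k) N.
Proof.
  induction N as [|N IH]; [simpl; ring|].
  rewrite seq_S, sumL_app, IH. simpl. ring.
Qed.

Lemma not_null_interval (P : R -> Prop) c d : c < d -> null_set P ->
  exists x, c < x < d /\ ~ P x.
Proof.
  intros Hcd HP. apply NNPP; intros Hn.
  destruct (HP ((d - c)/4) ltac:(lra)) as [a [b [H1 [H2 H3]]]].
  assert (Hcov : forall y, c + (d-c)/4 <= y <= d - (d-c)/4 -> exists k, a k < y < b k).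
  { intros y Hy; apply H2. apply NNPP; intros Hy'; apply Hn; exists y; split; [lra|auto]. }
  destruct (hb a b (c + (d-c)/4) (d - (d-c)/4) ltac:(lra) Hcov) as [N HN].
  assert (Hf := finite_cover a b H1 _ (seq 0 (S N)) (le_n _) (c + (d-c)/4) (d - (d-c)/4) ltac:(lra)).
  rewrite sumL_seq in Hf. specialize (H3 N).
  assert (d - (d - c) / 4 - (c + (d - c) / 4) < (d-c)/4); [|lra].
  eapply Rlt_le_trans; [apply Hf|auto].
  intros y Hy; destruct (HN y Hy) as [k [Hk Hk2]]; exists k; split; [apply in_seq; lia|auto].
Qed.

Definition u0 (n : nat) (x : R) : R := (IZR (Int_part (x * INR n)) + 1) / (INR n + 1).

Lemma Int_part_eq (z : Z) (y : R) : IZR z <= y < IZR z + 1 -> Int_part y = z.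
Proof.
  intros [H1 H2]. destruct (base_Int_part y) as [H3 H4].
  assert (A : (Int_part y < z + 1)%Z) by (apply lt_IZR; rewrite plus_IZR; simpl; lra).
  assert (B : (z < Int_part y + 1)%Z) by (apply lt_IZR; rewrite plus_IZR; simpl; lra).
  lia.
Qed.

Lemma INR_n_ge2 n : (1 < n)%nat -> 2 <= INR n.
Proof. intros H. replace 2 with (INR 2) by (simpl; ring). apply le_INR; lia. Qed.

Lemma u0_formula n (Hn : (1 < n)%nat) z t : 0 < t < / INR n ->
  u0 n (t + IZR z * / INR n) = (IZR z + 1) / (INR n + 1).
Proof.
  intros Ht. assert (H2 := INR_n_ge2 n Hn). unfold u0.
  rewrite (Int_part_eq z); [reflexivity|].
  replace ((t + IZR z * / INR n) * INR n) with (t * INR n + IZR z) by (field; lra).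
  assert (0 < t * INR n < 1); [|lra].
  split; [nra|]. destruct Ht as [_ Ht].
  apply Rmult_lt_compat_r with (r := INR n) in Ht; [|lra].
  rewrite Rinv_l in Ht; lra.
Qed.

Lemma decomp n (Hn : (1 < n)%nat) x :
  (exists z, x = IZR z * / INR n) \/ (exists z t, 0 < t < / INR n /\ x = t + IZR z * / INR n).
Proof.
  assert (H2 := INR_n_ge2 n Hn).
  destruct (base_Int_part (x * INR n)) as [H3 H4].
  set (z := Int_part (x * INR n)) in *.
  destruct (Req_dec (IZR z) (x * INR n)) as [He|He].
  - left; exists z; rewrite He; field; lra.
  - right; exists z, (x - IZR z * / INR n). split; [|ring].
    assert (Hr : 0 < / INR n) by (apply Rinv_0_lt_compat; lra).
    split.
    + assert (IZR z * / INR n < x); [|lra].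
      apply Rmult_lt_reg_r with (INR n); [lra|].
      rewrite Rmult_assoc, Rinv_l; lra.
    + assert (x < (IZR z + 1) * / INR n); [|lra].
      apply Rmult_lt_reg_r with (INR n); [lra|].
      rewrite Rmult_assoc, Rinv_l; lra.
Qed.

Lemma zbounds r (Hr : 0 < r) x t z lo hi : 0 < t < r -> x = t + IZR z * r ->
  IZR lo * r <= x <= IZR hi * r -> (lo <= z < hi)%Z.
Proof.
  intros Ht -> [H1 H2].
  assert (A : (z < hi)%Z).
  { apply lt_IZR. apply Rmult_lt_reg_r with r; lra. }
  assert (B : (lo < z + 1)%Z).
  { apply lt_IZR. rewrite plus_IZR. apply Rmult_lt_reg_r with r; lra. }
  lia.
Qed.

Lemma lbounds r (Hr : 0 < r) x z lo hi : x = IZR z * r ->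
  IZR lo * r <= x <= IZR hi * r -> (lo <= z <= hi)%Z.
Proof.
  intros -> [H1 H2]. split; apply le_IZR; apply Rmult_le_reg_r with r; lra.
Qed.

Lemma nr_eq n (Hn : (1 < n)%nat) : IZR (Z.of_nat n) * / INR n = 1.
Proof. rewrite <- INR_IZR_INZ. assert (H2 := INR_n_ge2 n Hn). field; lra. Qed.

Definition lattice (n : nat) (x : R) : Prop :=
  exists z, (-1 <= z <= Z.of_nat n + 1)%Z /\ x = IZR z * / INR n.

Lemma lattice_null n : null_set (lattice n).
Proof.
  unfold lattice.
  apply null_finiteZ with (P := fun z x => x = IZR z * / INR n); [lia|].
  intros z _; apply null_point.
Qed.

Lemma range_lattice n (Hn : (1 < n)%nat) x z :
  - / INR n <= x <= 1 + / INR n -> x = IZR z * / INR n -> lattice n x.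
Proof.
  intros Hx Hz. assert (H2 := INR_n_ge2 n Hn).
  assert (Hr : 0 < / INR n) by (apply Rinv_0_lt_compat; lra).
  exists z; split; auto.
  apply (lbounds (/ INR n) Hr x); auto.
  rewrite plus_IZR, Rmult_plus_distr_r, nr_eq by auto. simpl. lra.
Qed.

Lemma sol_eq_u0 n (Hn : (1 < n)%nat) u : is_solution (/ INR n) u ->
  ae_on (fun x => - / INR n <= x <= 1 + / INR n) (fun x => u x = u0 n x).
Proof.
  intros [HD [HL HR]].
  set (r := / INR n) in *.
  assert (H2 := INR_n_ge2 n Hn).
  assert (Hr : 0 < r) by (apply Rinv_0_lt_compat; lra).
  assert (Hnr : INR n * r = 1) by (unfold r; field; lra).
  set (B := fun x => ((0 < x < 1) /\ ~ Dr r u x = 0) \/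
                     ((- r <= x <= 0 /\ ~ u x = 0) \/ (1 <= x <= 1 + r /\ ~ u x = 1))).
  assert (HB : null_set B) by (apply null_union; [auto|apply null_union; auto]).
  set (T := fun t => exists z, (-1 <= z <= Z.of_nat n)%Z /\ B (t + IZR z * r)).
  assert (HT : null_set T).
  { apply null_finiteZ with (P := fun z t => B (t + IZR z * r)); [lia|].
    intros z _; apply null_translate; auto. }
  assert (Good : forall t, 0 < t < r -> ~ T t -> forall z, (-1 <= z <= Z.of_nat n)%Z ->
             u (t + IZR z * r) = (IZR z + 1) / (INR n + 1)).
  { intros t Ht HnT.
    assert (NB : forall z, (-1 <= z <= Z.of_nat n)%Z -> ~ B (t + IZR z * r))
      by (intros z Hz HBz; apply HnT; exists z; auto).
    set (f := fun k => u (t + (INR k - 1) * r)).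
    assert (Hf0 : f O = 0).
    { unfold f. destruct (Req_dec (u (t + (INR 0 - 1) * r)) 0) as [E|E]; auto.
      exfalso; apply (NB (-1)%Z); [lia|]. right; left. simpl in *.
      replace (t + -1 * r) with (t + (0 - 1) * r) by ring. split; [lra|auto]. }
    assert (Hfn : f (S n) = 1).
    { unfold f. rewrite S_INR.
      destruct (Req_dec (u (t + (INR n + 1 - 1) * r)) 1) as [E|E]; auto.
      exfalso; apply (NB (Z.of_nat n)); [lia|]. right; right.
      rewrite <- INR_IZR_INZ.
      replace (t + INR n * r) with (t + (INR n + 1 - 1) * r) by ring. split; [nra|auto]. }
    assert (Hrec : forall k, (1 <= k <= n)%nat -> f (S k) + f (k - 1)%nat = 2 * f k).
    { intros k Hk. unfold f.
      assert (Hx : 0 < t + (INR k - 1) * r < 1).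
      { assert (1 <= INR k <= INR n) by (split; [replace 1 with (INR 1) by reflexivity|]; apply le_INR; lia).
        split; nra. }
      destruct (Req_dec (Dr r u (t + (INR k - 1) * r)) 0) as [E|E].
      - unfold Dr in E. rewrite S_INR, minus_INR by lia. simpl INR.
        replace (t + (INR k + 1 - 1) * r) with (t + (INR k - 1) * r + r) by ring.
        replace (t + (INR k - 1 - 1) * r) with (t + (INR k - 1) * r - r) by ring.
        assert (Hr2 : r ^ 2 <> 0) by (apply pow_nonzero; lra).
        set (A := u (t + (INR k - 1) * r + r) + u (t + (INR k - 1) * r - r) - 2 * u (t + (INR k - 1) * r)) in *.
        assert (A = 0); [|unfold A in *; lra].
        replace A with (A / r ^ 2 * r ^ 2). { rewrite E; ring. } field; lra.
      - exfalso; apply (NB (Z.of_nat k - 1)%Z); [lia|]. left.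
        rewrite minus_IZR, <- INR_IZR_INZ. simpl IZR. split; auto. }
    assert (Hlin : forall k, (k <= n)%nat -> f k = INR k * f 1%nat /\ f (S k) = INR (S k) * f 1%nat).
    { induction k as [|k IH]; intros Hk.
      - rewrite Hf0; simpl; split; ring.
      - destruct (IH ltac:(lia)) as [IH1 IH2]. split; auto.
        assert (Hr1 := Hrec (S k) ltac:(lia)). replace (S k - 1)%nat with k in Hr1 by lia.
        rewrite !S_INR in *. nra. }
    assert (Hf1 : f 1%nat = 1 / (INR n + 1)).
    { destruct (Hlin n (le_n _)) as [_ E]. rewrite Hfn, S_INR in E. field_simplify_eq; [lra|lra]. }
    intros z Hz.
    assert (Hk := proj1 (Hlin (Z.to_nat z) ltac:(lia))).
    destruct (Z.eq_dec z (-1)) as [->|Hz1].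
    + simpl IZR. replace (t + -1 * r) with (t + (INR 0 - 1) * r) by (simpl; ring).
      change (f O = (-1 + 1) / (INR n + 1)). rewrite Hf0; field; lra.
    + destruct (Hlin (Z.to_nat z) ltac:(lia)) as [_ E].
      unfold f in E. rewrite S_INR in E.
      rewrite INR_IZR_INZ, Z2Nat.id in E by lia.
      replace (t + (IZR z + 1 - 1) * r) with (t + IZR z * r) in E by ring.
      rewrite E. change (u (t + (INR 1 - 1) * r)) with (f 1%nat). rewrite Hf1. field; lra. }
  unfold ae_on.
  apply null_subset with (fun x => lattice n x \/ exists z, (-1 <= z <= Z.of_nat n)%Z /\ T (x + - (IZR z * r))).
  - intros x [Hx Hne].
    destruct (decomp n Hn x) as [[z Hz]|[z [t [Ht Hxt]]]].
    + left; eapply range_lattice; eauto.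
    + right. fold r in Ht, Hxt.
      assert (Hzb : (-1 <= z < Z.of_nat n + 1)%Z).
      { apply (zbounds r Hr x t); auto. rewrite plus_IZR, Rmult_plus_distr_r.
        assert (IZR (Z.of_nat n) * r = 1) by (apply nr_eq; auto). simpl IZR. lra. }
      exists z; split; [lia|].
      replace (x + - (IZR z * r)) with t by lra.
      apply NNPP; intros HnT. apply Hne. rewrite Hxt, (Good t Ht HnT z ltac:(lia)).
      unfold r; rewrite u0_formula; auto.
  - apply null_union; [apply lattice_null|].
    apply null_finiteZ with (P := fun z x => T (x + - (IZR z * r))); [lia|].
    intros z _; apply null_translate; auto.
Qed.

Theorem corollary1p11 (n : nat) (hn : (1 < n)%nat) :
  let r := / INR n in
  (exists u : R -> R, is_solution r u) /\
  (forall u v : R -> R, is_solution r u -> is_solution r v ->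
     ae_on (fun x => - r <= x <= 1 + r) (fun x => u x = v x)) /\
  (forall u : R -> R, is_solution r u ->
     ~ (exists v : R -> R, continuous_on_Icc (- r) (1 + r) v /\
          ae_on (fun x => - r <= x <= 1 + r) (fun x => u x = v x))).
Proof.
  intros r.
  assert (H2 := INR_n_ge2 n hn).
  assert (Hr : 0 < r) by (apply Rinv_0_lt_compat; lra).
  assert (Hnr : IZR (Z.of_nat n) * r = 1) by (apply nr_eq; auto).
  assert (Hnr' : INR n * r = 1) by (unfold r; field; lra).
  split; [|split].
  - exists (u0 n). split; [|split]; unfold ae_on; apply null_subset with (lattice n);
      try apply lattice_null; intros x [Hx Hne];
      (destruct (decomp n hn x) as [[z Hz]|[z [t [Ht Hxt]]]];
        [eapply range_lattice; [auto| |exact Hz]; unfold r in *; lra|exfalso; apply Hne]); fold r in Ht, Hxt.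
    + unfold Dr.
      replace (x + r) with (t + IZR (z + 1) * r) by (rewrite plus_IZR, Hxt; simpl; ring).
      replace (x - r) with (t + IZR (z - 1) * r) by (rewrite minus_IZR, Hxt; simpl; ring).
      rewrite Hxt. unfold r. rewrite !u0_formula by auto. rewrite plus_IZR, minus_IZR.
      simpl IZR. field. split; lra.
    + assert (Hz : (-1 <= z < 0)%Z) by (apply (zbounds r Hr x t); auto; simpl IZR; lra).
      replace z with (-1)%Z in Hxt by lia. rewrite Hxt. unfold r; rewrite u0_formula by auto.
      simpl IZR. field; lra.
    + assert (Hz : (Z.of_nat n <= z < Z.of_nat n + 1)%Z).
      { apply (zbounds r Hr x t); auto. rewrite plus_IZR, Rmult_plus_distr_r. simpl IZR. lra. }
      replace z with (Z.of_nat n) in Hxt by lia. rewrite Hxt. unfold r; rewrite u0_formula by auto.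
      rewrite <- INR_IZR_INZ. field; lra.
  - intros u v Hu Hv.
    assert (A := sol_eq_u0 n hn u Hu). assert (B := sol_eq_u0 n hn v Hv).
    unfold ae_on in *. eapply null_subset; [|apply null_union; [exact A|exact B]].
    intros x [Hx Hne]. simpl.
    destruct (Req_dec (u x) (u0 n x)) as [E1|E1]; [|left; auto].
    destruct (Req_dec (v x) (u0 n x)) as [E2|E2]; [|right; auto].
    exfalso; apply Hne; congruence.
  - intros u Hu [v [Hc Hae]].
    assert (A := sol_eq_u0 n hn u Hu). fold r in A.
    assert (N : null_set (fun x => (- r <= x <= 1 + r) /\ ~ v x = u0 n x)).
    { unfold ae_on in *. eapply null_subset; [|apply null_union; [exact A|exact Hae]].
      intros x [Hx Hne]. simpl.
      destruct (Req_dec (u x) (u0 n x)) as [E1|E1]; [|left; auto].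
      destruct (Req_dec (u x) (v x)) as [E2|E2]; [|right; auto].
      exfalso; apply Hne; congruence. }
    assert (Hrr : r <= 1 + r - r) by (assert (2 * r <= 1) by nra; lra).
    destruct (Hc r ltac:(lra) (1 / (2 * (INR n + 1))) ltac:(apply Rdiv_lt_0_compat; lra))
      as [d [Hd Hcd]].
    set (m := Rmin d r).
    assert (Hm : 0 < m /\ m <= d /\ m <= r) by (unfold m, Rmin; destruct (Rle_dec d r); lra).
    destruct (not_null_interval _ (r - m) r ltac:(lra) N) as [x1 [Hx1 Hn1]].
    destruct (not_null_interval _ r (r + m) ltac:(lra) N) as [x2 [Hx2 Hn2]].
    assert (E1 : v x1 = 1 / (INR n + 1)).
    { apply NNPP; intros Hne; apply Hn1; split; [lra|].
      replace x1 with (x1 + IZR 0 * / INR n) by ring. rewrite u0_formula by (auto; fold r; lra).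
      intros E. apply Hne. replace (x1 + 0 * / INR n) with x1 in E by ring. rewrite E; field; lra. }
    assert (E2 : v x2 = 2 / (INR n + 1)).
    { apply NNPP; intros Hne; apply Hn2; split; [lra|].
      replace x2 with ((x2 - r) + IZR 1 * / INR n) by (unfold r; ring).
      rewrite u0_formula by (auto; fold r; lra).
      intros E. apply Hne. replace (x2 - r + 1 * / INR n) with x2 in E by (unfold r; ring). rewrite E; field; lra. }
    assert (C1 := Hcd x1 ltac:(lra) ltac:(rewrite Rabs_left1; lra)).
    assert (C2 := Hcd x2 ltac:(lra) ltac:(rewrite Rabs_right; lra)).
    apply Rabs_def2 in C1; apply Rabs_def2 in C2.
    rewrite E1 in C1; rewrite E2 in C2.
    assert (Hq : 2 / (INR n + 1) - 1 / (INR n + 1) = 2 * (1 / (2 * (INR n + 1)))) by (field; lra).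
    lra.
Qed.
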